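(* The pair $(g,\eta)$ forms an exact pencil: with $e=\frac{\partial}{\partial u_{n-1}}$ one has $\mathcal{L}_e g=\eta$ and $\mathcal{L}_e\eta=0$.
   Context: $n\ge2$. $B_n$ acts on $\mathbb{C}^n$ (coordinates $p_1,\dots,p_n$) by permutations and sign changes. $u_k=\sum_{1\le i_1<\dots<i_k\le n}p_{i_1}^2\cdots p_{i_k}^2$ ($k=1,\dots,n$) are coordinates on the orbit space. $g$ is the cometric $g^{ij}(u)=\sum_{k,l}\frac{1-\delta^{kl}}{p_kp_l}\frac{\partial u_i}{\partial p_k}\frac{\partial u_j}{\partial p_l}$ (a polynomial in $u$) and $\eta^{ij}(u)=\frac{\partial g^{ij}}{\partial u_{n-1}}(u)$; $(g,\eta)$ is a flat pencil of contravariant metrics. $\mathcal{L}$ denotes the Lie derivative. *)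

(* Defs.v *)
From HB Require Import structures.
From mathcomp Require Import all_boot all_order all_algebra.
From mathcomp Require Import mpoly complex.
Set Implicit Arguments. Unset Strict Implicit. Unset Printing Implicit Defensive.
Import Order.TTheory GRing.Theory Num.Theory.
Local Open Scope ring_scope.

Section BnDefs.
Variables (K : comNzRingType) (n : nat).

(* u_{i+1} = sum_{|S| = i+1} prod_{l in S} p_l^2, as a polynomial in p_0..p_{n-1}
   (index i : 'I_n stands for u_{i+1}). *)
Definition uB (i : 'I_n) : {mpoly K[n]} :=
  \sum_(S : {set 'I_n} | #|S| == i.+1) \prod_(l in S) ('X_l ^+ 2).

Definition uOf (p : 'I_n -> K) : 'I_n -> K := fun i => meval p (uB i).

(* Components of the coordinate vector field d/du_m in u-coordinates. *)
Definition coordVF (m : 'I_n) : 'I_n -> {mpoly K[n]} :=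
  fun k => ((k == m)%:R)%:MP.

(* Lie derivative of a contravariant 2-tensor field T^{ij}(u) along the
   vector field X^k(u), both with polynomial components in coordinates u:
   (L_X T)^{ij} = X^k d_k T^{ij} - (d_k X^i) T^{kj} - (d_k X^j) T^{ik}. *)
Definition lie2 (X : 'I_n -> {mpoly K[n]}) (T : 'I_n -> 'I_n -> {mpoly K[n]})
  : 'I_n -> 'I_n -> {mpoly K[n]} :=
  fun i j => \sum_(k < n) (X k * mderiv k (T i j))
           - \sum_(k < n) (mderiv k (X i) * T k j)
           - \sum_(k < n) (mderiv k (X j) * T i k).

End BnDefs.

Section Cometric.
Variables (F : fieldType) (n : nat).
(* g^{ij} as a function of p (on the locus where all p_k <> 0):
   sum_{k <> l} 1/(p_k p_l) du_i/dp_k du_j/dp_l. *)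
Definition gB_p (p : 'I_n -> F) (i j : 'I_n) : F :=
  \sum_(k < n) \sum_(l < n | k != l)
     (p k * p l)^-1 * meval p (mderiv k (uB F i)) * meval p (mderiv l (uB F j)).

Definition is_cometric_u (G : 'I_n -> 'I_n -> {mpoly F[n]}) : Prop :=
  forall p : 'I_n -> F, (forall k, p k != 0) ->
    forall i j, meval (uOf p) (G i j) = gB_p p i j.
End Cometric.

(* The index n-2 : 'I_n (coordinate u_{n-1}), for n >= 2. *)
Lemma sub2_lt (n : nat) : (2 <= n)%N -> (n - 2 < n)%N.
Proof. by move=> hn; rewrite ltn_subrL (leq_trans _ hn). Qed.
Definition idx_nm1 (n : nat) (hn : (2 <= n)%N) : 'I_n := Ordinal (sub2_lt hn).

(* Main.v *)
Require Import Defs.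
From HB Require Import structures.
From mathcomp Require Import all_boot all_order all_algebra.
From mathcomp Require Import mpoly complex.
From mathcomp Require Import all_fingroup ring zify.
From Stdlib Require Import FunctionalExtensionality.
Import Order.TTheory GRing.Theory Num.Theory.
Local Open Scope ring_scope.
Set Implicit Arguments. Unset Strict Implicit. Unset Printing Implicit Defensive.

Lemma polyA (C : numDomainType) (P : {poly C}) :
  (forall t, t != 0 -> P.[t] = 0) -> P = 0.
Proof.
move=> h; apply/eqP; apply/negPn/negP => nz.
suff : (size [seq (i.+1)%:R : C | i <- iota 0 (size P)] < size P)%N.
  by rewrite size_map size_iota ltnn.
apply: max_poly_roots nz _ _.
- apply/allP => x /mapP [i _ ->]; by rewrite /root h ?eqxx // pnatr_eq0.
- have inj : injective (fun i : nat => (i.+1)%:R : C).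
    by move=> a b /eqP; rewrite eqr_nat eqSS => /eqP.
  by move: (iota_uniq 0 (size P)); rewrite -(map_inj_uniq inj).
Qed.

Lemma zariski (C : numDomainType) n (p : {mpoly C[n]}) :
  (forall v : 'I_n -> C, (forall k, v k != 0) -> p.@[v] = 0) -> p = 0.
Proof.
elim: n p => [|n IH] p hp.
  have m0 (m : 'X_{1..0}) : m = 0%MM by apply/mnmP => -[].
  have pE : p = (p@_0)%:MP.
    by apply/mpolyP => m; rewrite mcoeffC (m0 m) eqxx mulr1.
  have := hp (fun _ => 0) (fun k => match k with Ordinal _ h => False_ind _ (notF h) end).
  by rewrite pE mevalC => ->.
pose w := widen_ord (leqnSn n).
have uw (i : 'I_n) : unlift ord_max (w i) = Some i.
  have -> : w i = lift ord_max i by apply/val_inj; rewrite /= /bump leqNgt ltn_ord.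
  by rewrite liftK.
pose vext (v : 'I_n -> C) t (i : 'I_n.+1) := oapp v t (unlift ord_max i).
pose Pv (v : 'I_n -> C) : {poly C} := \sum_(m <- msupp p)
   (p@_m * \prod_(i < n) v i ^+ m (w i)) *: 'X^(m ord_max).
have hPv v t : (Pv v).[t] = p.@[vext v t].
  rewrite mevalE horner_sum; apply: eq_bigr => m _.
  rewrite hornerZ hornerXn big_ord_recr /= -mulrA; congr (_ * (_ * _)).
    by apply: eq_bigr => i _; rewrite /vext uw.
  by rewrite /vext unlift_none.
pose Q k : {mpoly C[n]} := \sum_(m <- msupp p | m ord_max == k)
   p@_m *: 'X_[[multinom m (w i) | i < n]].
have hQ v k : (Pv v)`_k = (Q k).@[v].
  rewrite coef_sum rmorph_sum /= [RHS]big_mkcond /=; apply: eq_bigr => m _.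
  rewrite coefZ coefXn eq_sym; case: eqP => _; last by rewrite mulr0.
  rewrite mulr1 mevalZ mevalX; congr (_ * _); apply: eq_bigr => i _.
  by rewrite mnmE.
have Q0 k : Q k = 0.
  apply: IH => v hv; rewrite -hQ.
  have -> : Pv v = 0 by apply: polyA => t ht; rewrite hPv; apply: hp => i;
     rewrite /vext; case: (unlift _ i) => //=.
  by rewrite coef0.
apply/mpolyP => m; rewrite mcoeff0.
have := congr1 (fun q => q@_[multinom m (w i) | i < n]) (Q0 (m ord_max)).
rewrite /= mcoeff0 raddf_sum /= => <-.
rewrite (big_mkcond) /=.
case: (boolP (m \in msupp p)) => hm; last first.
  rewrite (memN_msupp_eq0 hm) big1_seq // => m2 /= hm2.
  case: eqP => //= e; rewrite mcoeffZ mcoeffX.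
  case: eqP => [e2|]; last by rewrite mulr0.
  suff em : m2 = m by move: hm; rewrite -em hm2.
  apply/mnmP => i; case: (unliftP ord_max i) => [j ->|->] //.
  have := congr1 (fun mm : 'X_{1..n} => mm j) e2; rewrite !mnmE.
  have -> : lift ord_max j = w j by apply/val_inj; rewrite /= /bump leqNgt ltn_ord.
  by [].
rewrite (bigD1_seq m) ?msupp_uniq //= eqxx mcoeffZ mcoeffX eqxx mulr1 big1 ?addr0 //.
move=> m2 ne; case: eqP => //= e; rewrite mcoeffZ mcoeffX.
case: eqP => [e2|]; last by rewrite mulr0.
suff em : m2 = m by rewrite em eqxx in ne.
apply/mnmP => i; case: (unliftP ord_max i) => [j ->|->] //.
have := congr1 (fun mm : 'X_{1..n} => mm j) e2; rewrite !mnmE.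
have -> : lift ord_max j = w j by apply/val_inj; rewrite /= /bump leqNgt ltn_ord.
by [].
Qed.


Lemma msym_mderiv (R : comNzRingType) n (s : 'S_n) k (f : {mpoly R[n]}) :
  msym s (mderiv k f) = mderiv (s k) (msym s f).
Proof.
apply/mpolyP => m; rewrite mcoeff_sym !mcoeff_mderiv mcoeff_sym mnmE.
congr (f@_ _ *+ _); apply/mnmP => i; rewrite !mnmE.
by rewrite (inj_eq perm_inj).
Qed.

Lemma dY (R : comNzRingType) n (k : 'I_n) (h : {set 'I_n}) :
  mderiv k ('X_[mesym1 h] : {mpoly R[n]}) =
  if k \in h then 'X_[mesym1 (h :\ k)] else 0.
Proof.
rewrite mderivX mnmE; case: (boolP (k \in h)) => hk; last by rewrite scale0r.
rewrite scale1r; congr (mpolyX _ _); apply/mnmP => i; rewrite !mnmE in_setD1.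
by rewrite eq_sym; case: eqP => [->|_]; rewrite ?hk // subn0.
Qed.

Lemma dmesym_homog (R : comNzRingType) n (k : 'I_n) d :
  mderiv k (mesym n R d.+1) \is d.-homog.
Proof.
rewrite mesymE raddf_sum /=; apply: rpred_sum => h /eqP hh.
rewrite dY; case: ifP => hk; last exact: dhomog0.
rewrite dhomogX; apply/eqP; apply: (etrans (mdeg_mesym1 _)).
by move: hh; rewrite (cardsD1 k h) hk add1n => -[].
Qed.

Definition Tm (R : comNzRingType) n (i j : nat) : {mpoly R[n]} :=
  \sum_(k < n) \sum_(l < n | k != l)
    (mderiv k (mesym n R i.+1) * mderiv l (mesym n R j.+1)) *+ 4.

Lemma Tm_sym (R : comNzRingType) n i j : Tm R n i j \is symmetric.
Proof.
apply/issymP => s; rewrite /Tm raddf_sum /=.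
rewrite [RHS](reindex_inj (@perm_inj _ s)); apply: eq_bigr => k _.
rewrite raddf_sum /= [RHS](reindex_inj (@perm_inj _ s)) /=.
apply: eq_big => [l|l _]; first by rewrite (inj_eq perm_inj).
rewrite msymMn msymM !msym_mderiv.
by rewrite !(issymP _ (mesym_sym _ _ _)).
Qed.

Lemma Tm_homog (R : comNzRingType) n i j : Tm R n i j \is (i + j)%N.-homog.
Proof.
apply: rpred_sum => k _; apply: rpred_sum => l _; apply: rpredMn.
by apply: dhomogM; apply: dmesym_homog.
Qed.

Lemma homog_msize_le (R : comNzRingType) n d (p : {mpoly R[n]}) :
  p \is d.-homog -> (msize p <= d.+1)%N.
Proof.
move=> /dhomogP hp; rewrite msizeE; apply/bigmax_leqP_seq => m hm _.
by rewrite hp.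
Qed.


Definition sq (K : comNzRingType) n (p : 'I_n -> K) := fun k => p k ^+ 2.

Lemma uBE (K : comNzRingType) n (i : 'I_n) :
  uB K i = \sum_(h : {set 'I_n} | #|h| == i.+1) 'X_[mesym1 h *+ 2].
Proof.
apply: eq_bigr => h _; rewrite mpolyXE_id [LHS]big_mkcond /=.
apply: eq_bigr => l _; rewrite mulmnE !mnmE.
by case: (l \in h); rewrite ?mul1n ?mul0n ?expr0.
Qed.

Lemma meval_sq (K : comNzRingType) n (p : 'I_n -> K) (m : 'X_{1..n}) :
  meval p 'X_[m *+ 2] = meval (sq p) 'X_[m].
Proof.
rewrite !mevalX; apply: eq_bigr => i _; rewrite mulmnE /sq.
by rewrite mulnC exprM.
Qed.

Lemma meval_uB (K : comNzRingType) n (p : 'I_n -> K) (i : 'I_n) :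
  meval p (uB K i) = meval (sq p) (mesym n K i.+1).
Proof.
rewrite uBE mesymE !rmorph_sum /=; apply: eq_bigr => h _.
exact: meval_sq.
Qed.

Lemma dXsq (K : comNzRingType) n (k : 'I_n) (h : {set 'I_n}) :
  mderiv k ('X_[mesym1 h *+ 2] : {mpoly K[n]}) =
  if k \in h then ('X_k * 'X_[mesym1 (h :\ k) *+ 2]) *+ 2 else 0.
Proof.
rewrite mderivX mulmnE mnmE; case: (boolP (k \in h)) => hk; last by rewrite mul0n scale0r.
rewrite mul1n -scaler_nat; congr (_ *: _).
rewrite -mpolyXD; congr (mpolyX _ _); apply/mnmP => i; rewrite !mnmE in_setD1.
case: (eqVneq k i) => [<-|ne] /=; first by rewrite hk.
by rewrite subn0 add0n.
Qed.

Lemma mderiv_sum (K : comNzRingType) n (k : 'I_n) (I : Type) (r : seq I) (P : pred I) (F : I -> {mpoly K[n]}) :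
  mderiv k (\sum_(x <- r | P x) F x) = \sum_(x <- r | P x) mderiv k (F x).
Proof.
apply: (big_rec2 (fun a b => mderiv k a = b)); first exact: mderiv0.
by move=> x a b _ <-; rewrite mderivD. Qed.

Lemma meval_duB (K : comNzRingType) n (p : 'I_n -> K) (i k : 'I_n) :
  meval p (mderiv k (uB K i)) =
  2%:R * p k * meval (sq p) (mderiv k (mesym n K i.+1)).
Proof.
rewrite uBE mesymE !mderiv_sum !rmorph_sum /= mulr_sumr; apply: eq_bigr => h _.
rewrite dXsq dY; case: (k \in h); last by rewrite !rmorph0 mulr0.
by rewrite mevalMn mevalM mevalXU meval_sq mulr_natl mulrnAl.
Qed.

Lemma gB_pE (K : fieldType) n (p : 'I_n -> K) (i j : 'I_n) :
  (forall k, p k != 0) ->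
  gB_p p i j = meval (sq p) (Tm K n i j).
Proof.
move=> hp; rewrite /gB_p /Tm [RHS]rmorph_sum /=; apply: eq_bigr => k _.
rewrite [RHS]rmorph_sum /=; apply: eq_bigr => l _.
rewrite !meval_duB mevalMn mevalM.
have := hp k; have := hp l.
set a := meval _ (mderiv k _); set b := meval _ (mderiv l _).
move=> hl hk; field; by rewrite hl hk.
Qed.

Lemma meval_uOf (K : comNzRingType) n (p : 'I_n -> K) (G : {mpoly K[n]}) :
  meval (uOf p) G = meval (sq p) (G \mPo [tuple mesym n K i.+1 | i < n]).
Proof.
rewrite comp_mpoly_meval; apply: meval_eq => i.
by rewrite tnth_mktuple /uOf meval_uB.
Qed.


Lemma card_pairs n (a b : 'I_n) : a != b ->
  #|[pred x : 'I_n * 'I_n | (x.1 != x.2) && ([set x.1; x.2] == [set a; b])]| = 2%N.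
Proof.
move=> ab.
transitivity #|pred2 (a, b) (b, a)|; last by rewrite card2 xpair_eqE negb_and ab.
  apply: eq_card => -[k l]; rewrite !inE /=.
  apply/idP/idP.
    move=> /andP[kl /eqP E].
    have ka : k \in [set a; b] by rewrite -E set21.
    have la : l \in [set a; b] by rewrite -E set22.
    move: ka la; rewrite !inE => /orP[/eqP ek|/eqP ek] /orP[/eqP el|/eqP el]; subst k l;
      rewrite ?eqxx ?orbT //; by move: kl; rewrite eqxx.
  move=> /orP[/eqP[-> ->]|/eqP[-> ->]]; first by rewrite ab eqxx.
  by rewrite eq_sym ab /= setUC.
Qed.

Lemma sum_pairs (V : zmodType) n (F : {set 'I_n} -> V) :
  \sum_(k < n) \sum_(l < n | k != l) F [set k; l] =
  (\sum_(h : {set 'I_n} | #|h| == 2) F h) *+ 2.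
Proof.
rewrite pair_big_dep /=.
rewrite (partition_big (fun x : 'I_n * 'I_n => [set x.1; x.2]) (fun h => #|h| == 2)) /=;
  last by move=> [k l] /= kl; rewrite cards2 kl.
rewrite -sumrMnl; apply: eq_bigr => h /cards2P [a [b [ab ->]]].
rewrite (eq_bigr (fun _ => F [set a; b])); last by move=> x /andP[_ /eqP ->].
rewrite sumr_const; congr (_ *+ _); rewrite -(card_pairs ab).
by apply: eq_card => x; rewrite !inE.
Qed.

Lemma mesym_top (K : comNzRingType) n :
  mesym n K n = 'X_[mesym1 (setT : {set 'I_n})].
Proof.
rewrite mesymE (big_pred1 setT) // => h /=.
rewrite eqEcard subsetT cardsT card_ord.
have := max_card (mem h); rewrite card_ord => hm.
by rewrite eqn_leq hm.
Qed.

Lemma Tm_top (K : comNzRingType) n i : i.+1 = n -> (2 <= n)%N ->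
  Tm K n i i = (mesym n K n * mesym n K (n - 2)) *+ 8.
Proof.
move=> hi hn; rewrite /Tm hi.
have dk k : mderiv k (mesym n K n) = 'X_[mesym1 (setT :\ k)].
  by rewrite mesym_top dY in_setT.
have pr k l : k != l -> mderiv k (mesym n K n) * mderiv l (mesym n K n) =
   'X_[mesym1 (setT : {set 'I_n})] * 'X_[mesym1 (~: [set k; l])].
  move=> kl; rewrite !dk -!mpolyXD; congr (mpolyX _ _); apply/mnmP => x.
  rewrite !mnmE !inE.
  case: (eqVneq x k) => [->|xk]; first by rewrite kl.
  by case: (x == l).
rewrite (eq_bigr (fun k => \sum_(l < n | k != l)
   ('X_[mesym1 (setT : {set 'I_n})] * 'X_[mesym1 (~: [set k; l])]) *+ 4)); last first.
  by move=> k _; apply: eq_bigr => l kl; rewrite pr.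
rewrite (eq_bigr (fun k => ('X_[mesym1 (setT : {set 'I_n})] *
    \sum_(l < n | k != l) 'X_[mesym1 (~: [set k; l])]) *+ 4)); last first.
  by move=> k _; rewrite sumrMnl mulr_sumr.
rewrite sumrMnl -mulr_sumr.
rewrite (sum_pairs (fun h => 'X_[mesym1 (~: h)] : {mpoly K[n]})) mesym_top.
rewrite mulrnAr -mulrnA; congr (_ * _ *+ _).
rewrite mesymE (reindex_inj (@setC_inj _)) /=; apply: eq_big => [h|h _]; last by rewrite setCK.
have := cardsC h; rewrite card_ord => e.
move: e; move: #|h| #|~: h| => a b e.
by apply/eqP/eqP => hh; lia.
Qed.


Lemma lie2_coord (K : comNzRingType) n (m : 'I_n) (T : 'I_n -> 'I_n -> {mpoly K[n]}) :
  lie2 (coordVF K m) T = fun i j => mderiv m (T i j).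
Proof.
apply: functional_extensionality => i; apply: functional_extensionality => j.
rewrite /lie2 /coordVF (bigD1 m) //= eqxx mpolyC1 mul1r big1 ?addr0; last first.
  by move=> k km; rewrite (negbTE km) mpolyC0 mul0r.
rewrite big1 ?big1 ?subr0 // => k _; by rewrite mderivC mul0r.
Qed.

Lemma pred_lt n : (2 <= n)%N -> (n.-1 < n)%N.
Proof. by case: n. Qed.

Lemma top_comp (K : comNzRingType) n (hn : (2 <= n)%N) :
  let lst : 'I_n := Ordinal (pred_lt hn) in
  let w : 'X_{1..n} := [multinom (i.+3 == n : nat) | i < n] in
  (mesym n K n * mesym n K (n - 2)) *+ 8 =
  (('X_[U_(lst) + w] : {mpoly K[n]}) *+ 8) \mPo [tuple mesym n K i.+1 | i < n].
Proof.
move=> lst w; rewrite comp_mpolyMn mpolyXD rmorphM /=; congr (_ * _ *+ _).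
  by rewrite comp_mpolyX (bigD1 lst) //= big1 ?mulr1 => [|k kl];
   rewrite ?tnth_mktuple ?mnmE ?eqxx ?expr1 ?prednK ?(eq_sym lst) ?(negbTE kl) ?expr0 //;
   exact: (leq_trans _ hn).
rewrite comp_mpolyX.
case: (ltnP 2 n) => h3.
  have i0lt : (n - 3 < n)%N by lia.
  pose i1 : 'I_n := Ordinal i0lt.
  rewrite (bigD1 i1) //= big1 ?mulr1 => [|k kl].
    rewrite tnth_mktuple mnmE /=.
    have -> : (n - 3).+3 == n by apply/eqP; lia.
    by rewrite expr1; congr (mesym _ _ _); lia.
  rewrite mnmE; case: eqP => // e; move: kl; suff -> : k = i1 by rewrite eqxx.
  by apply/val_inj => /=; lia.
have -> : (n - 2 = 0)%N by lia.
rewrite mesym0E big1 // => k _; rewrite mnmE.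
have := ltn_ord k; case: eqP => //= e; lia.
Qed.

Theorem mainTheorem14 (R : rcfType) (n : nat) (hn : (2 <= n)%N) :
  let m : 'I_n := idx_nm1 hn in
  let e := coordVF R[i] m in
  (exists G : 'I_n -> 'I_n -> {mpoly R[i][n]}, is_cometric_u G) /\
  forall G : 'I_n -> 'I_n -> {mpoly R[i][n]},
    is_cometric_u G ->
    let eta := fun a b => mderiv m (G a b) in
    lie2 e G = eta /\ lie2 e eta = (fun _ _ => 0).
Proof.
move=> m e.
pose S := [tuple mesym n R[i] i.+1 | i < n].
pose G0 (a b : 'I_n) := sval (sym_fundamental (Tm_sym R[i] n a b)).
have G0S a b : G0 a b \mPo S = Tm R[i] n a b.
  exact: (proj1 (svalP (sym_fundamental (Tm_sym R[i] n a b)))).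
have G0w a b : (mweight (G0 a b) <= msize (Tm R[i] n a b))%N.
  exact: (proj2 (svalP (sym_fundamental (Tm_sym R[i] n a b)))).
split.
  exists G0 => p hp a b.
  by rewrite meval_uOf G0S gB_pE.
move=> G hG eta.
have GE a b : G a b = G0 a b.
  apply: msym_fundamental_un; rewrite G0S.
  apply/eqP; rewrite -subr_eq0; apply/eqP; apply: zariski => v hv.
  pose p k := sqrtC (v k).
  have hp k : p k != 0 by rewrite sqrtC_eq0.
  have sqp : sq p =1 v by move=> k; rewrite /sq sqrtCK.
  rewrite mevalB -!(meval_eq _ sqp) -meval_uOf hG.
  apply: (etrans (congr1 (fun x => x - _) (gB_pE a b hp))); exact: subrr.
  exact: hp.
have dd a b : mderiv m (mderiv m (G a b)) = 0.
  apply/mpolyP => mu; rewrite !mcoeff_mderiv mcoeff0.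
  suff -> : (G a b)@_(mu + U_(m) + U_(m)) = 0 by rewrite !mul0rn.
  apply/eqP/negPn/negP => hin; rewrite -mcoeff_msupp GE in hin.
  have h1 := mmeasure_mnm_lt (Measure.clone _ mnmwgt _) hin.
  have h2 := leq_trans h1 (G0w a b).
  have h3 := leq_trans h2 (homog_msize_le (Tm_homog R[i] n a b)).
  move: h3; rewrite /= !mnmwgtD !mnmwgt1 /= => h3.
  have ha := ltn_ord a; have hb := ltn_ord b.
  have ea : (a.+1 = n)%N by lia.
  have eb : b = a by apply/val_inj => /=; lia.
  move: hin; rewrite eb.
  have := Tm_top R[i] ea hn; rewrite top_comp -G0S => /msym_fundamental_un ->.
  rewrite mcoeff_msupp mcoeffMn mcoeffX.
  rewrite [X in nat_of_bool X](_ : _ = false) ?mul0rn ?eqxx //.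
  apply/negP => /eqP E.
  have := congr1 (fun x : 'X_{1..n} => x m) E; rewrite !mnmE /=.
  rewrite eqxx; have -> : (Ordinal (pred_lt hn) == m) = false.
    by apply/negP => /eqP/(congr1 val); rewrite /m /idx_nm1 /=; lia.
  have -> : ((n - 2).+3 == n) = false by apply/negP => /eqP; lia.
  lia.
split; first by rewrite lie2_coord.
rewrite lie2_coord; apply: functional_extensionality => a.
by apply: functional_extensionality => b; rewrite /eta dd.
Qed.
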